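(* Let $k\ge 2$ be an integer, let $G$ be a $(k+1)$-regular graph, and suppose that $S_0$ is a $k$-conversion set of $G$ with $|S_0|=k$. Then $|V(G)-S_0|<\frac{k(k+1)-1}{k-1}$.
   Context: For a graph $G=(V,E)$, a positive integer $k$ and a set $S_0\subseteq V$, the irreversible $k$-threshold conversion process is defined by: for $t=1,2,\dots$, the set of converted vertices at time $t$ is obtained from that at time $t-1$ by adjoining all vertices having at least $k$ neighbours among the vertices converted at time $t-1$ (with $S_0$ converted at time $0$). The set $S_0$ is a $k$-conversion set of $G$ if every vertex of $G$ is eventually converted. *)

(* Defs.v *)
From mathcomp Require Import all_boot all_order all_algebra.
Set Implicit Arguments. Unset Strict Implicit. Unset Printing Implicit Defensive.

Definition simple_graph (T : finType) (e : rel T) : Prop :=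
  symmetric e /\ irreflexive e.

Definition nbhd (T : finType) (e : rel T) (v : T) : {set T} := [set u | e v u].

Definition regular (T : finType) (e : rel T) (r : nat) : Prop :=
  forall v : T, #|nbhd e v| = r.

Definition conv_step (T : finType) (e : rel T) (k : nat) (S : {set T}) : {set T} :=
  S :|: [set v | k <= #|nbhd e v :&: S|].

Definition converted (T : finType) (e : rel T) (k : nat) (S0 : {set T}) (t : nat)
  : {set T} := iter t (conv_step e k) S0.

Definition conversion_set (T : finType) (e : rel T) (k : nat) (S0 : {set T}) : Prop :=
  forall v : T, exists t : nat, v \in converted e k S0 t.

(* Main.v *)
Require Import Defs.
From mathcomp Require Import all_boot all_order all_algebra.
From mathcomp Require Import zify.
Import GRing.Theory Num.Theory.

Lemma card_sumb (T : finType) (A : {set T}) : #|A| = \sum_u ((u \in A) : nat).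
Proof. by rewrite -sum1_card big_mkcond /=; apply: eq_bigr => u _; case: (u \in A). Qed.

Lemma key_nat (k : nat) (T : finType) (e : rel T) (S0 : {set T}) :
  (2 <= k) ->
  simple_graph e ->
  regular e k.+1 ->
  conversion_set e k S0 ->
  #|S0| = k ->
  (k.+1 * #|T| >= 2 * k * #|~: S0| + 2) \/ #|~: S0| = 0.
Proof.
move=> k2 [esym eirr] reg conv cS0.
have [n0|npos] := posnP #|~: S0|; first by right.
left.
pose tau v := ex_minn (conv v).
have tauP v : v \in converted e k S0 (tau v).
  by rewrite /tau; case: ex_minnP.
have tauM v t : v \in converted e k S0 t -> tau v <= t.
  by rewrite /tau; case: ex_minnP => m _ H /H.
have tauS v : v \in S0 -> tau v = 0.
  by move=> vS; apply/eqP; rewrite -leqn0; apply: tauM.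
have tauN v : v \notin S0 -> 0 < tau v.
  move=> vS; rewrite lt0n; apply/negP => /eqP t0.
  by move: (tauP v); rewrite t0 /converted /= (negbTE vS).
pose a v := \sum_u ((e v u && (tau u < tau v)) : nat).
pose b v := \sum_u ((e v u && (tau u == tau v)) : nat).
pose c v := \sum_u ((e v u && (tau v < tau u)) : nat).
have degE v : k.+1 = a v + b v + c v.
  rewrite -(reg v) card_sumb /a /b /c -!big_split /=; apply: eq_bigr => u _.
  rewrite inE; case: (e v u) => //=.
  by case: (ltngtP (tau u) (tau v)).
have acE : \sum_v a v = \sum_v c v.
  rewrite /a /c exchange_big /=; apply: eq_bigr => v _; apply: eq_bigr => u _.
  by rewrite esym.
have aN v : v \notin S0 -> k <= a v.
  move=> vS; have := tauP v; have := tauN v vS.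
  case Ht: (tau v) => [//|t] _.
  rewrite /converted iterS -/(converted e k S0 t) /conv_step inE.
  have -> : (v \in converted e k S0 t) = false.
    by apply/negP => /tauM; rewrite Ht ltnn.
  rewrite /= inE => /leq_trans; apply.
  rewrite card_sumb /a; apply: leq_sum => u _.
  rewrite !inE Ht; case: (e v u) => //=.
  case H: (u \in converted e k S0 t) => //=.
  by rewrite ltnS tauM.
have [v0 v0S] : exists v0, v0 \in ~: S0.
  by apply/set0Pn; rewrite -card_gt0.
case: (@arg_maxnP _ v0 (mem (~: S0)) tau v0S) => vs vsS vsM.
have cvs : c vs = 0.
  apply/eqP; rewrite /c sum_nat_eq0; apply/forallP => u; apply/implyP => _.
  case: (e vs u) => //=; case: ltnP => // H; exfalso.
  case uS: (u \in S0); first by move: H; rewrite (tauS u uS).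
  have := vsM u; rewrite !inE uS => /(_ isT). move=> HH. have HH2 : tau u <= tau vs := HH. lia.
have vsN : vs \notin S0 by move: vsS; rewrite !inE.
have sumG (F : T -> nat) : \sum_(v in ~: S0) F v <= \sum_v F v.
  by rewrite [X in _ <= X](bigID (mem (~: S0))) /= leq_addr.
have sumA : k * #|~: S0| + (a vs - k) <= \sum_v a v.
  apply: leq_trans (sumG a); rewrite (bigD1 vs) //=.
  have : k * #|[predD1 (~: S0) & vs]| <= \sum_(i in ~: S0 | i != vs) a i.
    rewrite mulnC -sum_nat_const big_mkcond [X in _ <= X]big_mkcond /=.
    apply: leq_sum => i _; rewrite !inE; case: (i == vs) => //=.
    by case iS: (i \in S0) => //=; apply: aN; rewrite iS.
  have := cardD1 vs (~: S0); rewrite !inE vsN /= => ->.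
  have := aN vs vsN. lia.
have sumB : b vs <= \sum_v b v.
  by rewrite (bigD1 vs) //= leq_addr.
have key : 2 * k * #|~: S0| + 2 <= 2 * \sum_v a v + \sum_v b v.
  have avs := aN vs vsN.
  have dvs := degE vs; rewrite cvs addn0 in dvs.
  have [gt|le] := ltnP k (a vs); first by lia.
  have bvs : b vs = 1 by lia.
  case: (pickP (fun w => e vs w && (tau w == tau vs))) => [w /andP [ew tw] | H]; last first.
    have b0 : b vs = 0 by rewrite /b big1 // => u _; move: (H u) => /= ->.
    by rewrite b0 in bvs.
  have wne : w != vs by apply/eqP => wv; move: ew; rewrite wv eirr.
  have bw : 1 <= b w.
    rewrite /b (bigD1 vs) //= esym ew (eqP tw) eqxx /=; lia.
  have : b vs + b w <= \sum_v b v.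
    rewrite (bigD1 vs) //= leq_add2l (bigD1 w) //=.
    by rewrite leq_addr.
  lia.
have : \sum_(v : T) k.+1 = 2 * \sum_v a v + \sum_v b v.
  have -> : \sum_(v : T) k.+1 = \sum_v (a v + b v + c v) by apply: eq_bigr => v _; apply: degE.
  rewrite !big_split /= -acE; lia.
rewrite sum_nat_const cardT -cardE /=. lia.
Qed.

Local Open Scope ring_scope.

Theorem proposition3p1 (k : nat) (T : finType) (e : rel T) (S0 : {set T}) :
  (2 <= k)%N ->
  simple_graph e ->
  regular e k.+1 ->
  conversion_set e k S0 ->
  #|S0| = k ->
  (#|~: S0|%:R : rat) < (k * k.+1 - 1)%:R / (k - 1)%:R.
Proof.
move=> k2 sg reg conv cS0.
have := @key_nat _ _ _ _ k2 sg reg conv cS0.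
have cT := cardsC S0; rewrite cS0 in cT.
rewrite -cT.
have kp : (0 : rat) < (k - 1)%:R by rewrite ltr0n; lia.
rewrite ltr_pdivlMr // -natrM ltr_nat.
case=> [H|->]; first by nia.
rewrite mul0n; lia.
Qed.
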